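(* For every level $t \in \mathcal{L}$ there exists a unique finite set $\{u_1, \ldots, u_n\} \subseteq \mathcal{L}_s$ of pairwise incomparable sublevels (i.e. with $\max(u_1,\ldots,u_n) \in \mathcal{L}_r$) such that $t =_{\mathcal{L}} \max(u_1, \ldots, u_n)$.
   Context: $\operatorname{imax}\colon \mathbb{N}\times\mathbb{N}\to\mathbb{N}$ is defined by $\operatorname{imax}(i,0)=0$ and $\operatorname{imax}(i,j+1)=\max(i,j+1)$. Levels are terms of the grammar $t ::= x \mid 0 \mid s(t) \mid \max(t,t) \mid \operatorname{imax}(t,t)$, with $x$ in a countable set of variables $\mathcal{X}$; $\mathcal{L}$ is the set of levels. A valuation is $\sigma\colon\mathcal{X}\to\mathbb{N}$; values are $[0]_\sigma=0$, $[x]_\sigma=\sigma(x)$, $[s(t)]_\sigma=[t]_\sigma+1$, $[\max(t_1,t_2)]_\sigma=\max([t_1]_\sigma,[t_2]_\sigma)$, $[\operatorname{imax}(t_1,t_2)]_\sigma=\operatorname{imax}([t_1]_\sigma,[t_2]_\sigma)$. Sublevels: for finite $E\subseteq\mathcal{X}$, $x\in\mathcal{X}$, $S\in\mathbb{N}$, $[A(E,x,S)]_\sigma$ is $0$ if some $y\in E$ has $\sigma(y)=0$ and $\sigma(x)+S$ otherwise; $[B(E,S)]_\sigma$ is $0$ if some $y\in E$ has $\sigma(y)=0$ and $S$ otherwise. $\mathcal{L}_s$ is the set of sublevels $A(E,x,S)$ with $x\in E$ and $B(E,S)$ with $S>0$. $\max$ of a finite family is evaluated pointwise (empty max has value $0$).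 $t_1\leqslant_{\mathcal{L}} t_2$ (resp. $=_{\mathcal{L}}$) means $[t_1]_\sigma\le[t_2]_\sigma$ (resp. $=$) for every valuation $\sigma$. Sublevels $u,v$ are incomparable if neither $u\leqslant_{\mathcal{L}} v$ nor $v\leqslant_{\mathcal{L}} u$. $\mathcal{L}_r$ (minimal representations) is the set of formal expressions $\max(u_1,\ldots,u_n)$ with $\{u_1,\ldots,u_n\}$ a finite set of pairwise incomparable elements of $\mathcal{L}_s$. *)

(* Defs.v *)
From mathcomp Require Import all_boot finmap.
From Stdlib Require List.
Set Implicit Arguments. Unset Strict Implicit. Unset Printing Implicit Defensive.
Local Open Scope fset_scope.

Definition imax (i j : nat) : nat := if j is 0 then 0 else maxn i j.

Inductive level : Type :=
| LVar of nat
| LZero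
| LSucc of level
| LMax of level & level
| LIMax of level & level.

Definition valuation := nat -> nat.

Fixpoint level_eval (t : level) (sg : valuation) : nat :=
  match t with
  | LVar x => sg x
  | LZero => 0
  | LSucc t1 => (level_eval t1 sg).+1
  | LMax t1 t2 => maxn (level_eval t1 sg) (level_eval t2 sg)
  | LIMax t1 t2 => imax (level_eval t1 sg) (level_eval t2 sg)
  end.

(* Sublevels A(E,x,S) and B(E,S), E a finite set of variables. *)
Inductive sublevel : Type :=
| SubA of {fset nat} & nat & nat
| SubB of {fset nat} & nat.

Definition some_zero (E : {fset nat}) (sg : valuation) : bool :=
  [exists y : E, sg (val y) == 0].

Definition sub_eval (u : sublevel) (sg : valuation) : nat :=
  match u with
  | SubA E x k => if some_zero E sg then 0 else (sg x + k)%N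
  | SubB E k => if some_zero E sg then 0 else k
  end.

Definition in_Ls (u : sublevel) : Prop :=
  match u with
  | SubA E x _ => x \in E
  | SubB _ k => 0 < k
  end.

Definition sub_le (u v : sublevel) : Prop :=
  forall sg : valuation, sub_eval u sg <= sub_eval v sg.

Definition incomparable (u v : sublevel) : Prop :=
  ~ sub_le u v /\ ~ sub_le v u.

Definition max_eval (us : seq sublevel) (sg : valuation) : nat :=
  foldr (fun u m => maxn (sub_eval u sg) m) 0 us.

(* the list us (read as a finite set) is a set of pairwise incomparable
   elements of L_s whose max is L-equal to t *)
Definition min_rep_of (t : level) (us : seq sublevel) : Prop :=
  (forall u, List.In u us -> in_Ls u) /\
  (forall u v, List.In u us -> List.In v us -> u <> v -> incomparable u v) /\
  (forall sg : valuation, level_eval t sg = max_eval us sg).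

(* Main.v *)
Require Import Defs.
From mathcomp Require Import all_boot finmap.
From Stdlib Require List.
From Stdlib Require Import Classical.
From mathcomp Require Import zify.
Set Implicit Arguments. Unset Strict Implicit.
Local Open Scope fset_scope.

Lemma sz_intro E sg y : y \in E -> sg y = 0 -> some_zero E sg = true.
Proof. move=> yE h; apply/existsP; exists [` yE]; by apply/eqP. Qed.

Lemma sz_false E sg : some_zero E sg = false -> forall y, y \in E -> sg y <> 0.
Proof. by move=> h y yE e; rewrite (sz_intro yE e) in h. Qed.

Lemma sz_true E sg : some_zero E sg = true -> exists y, y \in E /\ sg y = 0.
Proof. by move/existsP=> [[y yE] /eqP /= h]; exists y. Qed.

Lemma sz_U E F sg : some_zero (E `|` F) sg = some_zero E sg || some_zero F sg.
Proof.
case h: (some_zero (E `|` F) sg).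
  have [y [/fsetUP [yE|yF] e]] := sz_true h.
  by rewrite (sz_intro yE e). by rewrite (sz_intro yF e) orbT.
case h1: (some_zero E sg).
  have [y [yE e]] := sz_true h1.
  have := sz_false h; move/(_ y); rewrite in_fsetU yE => /(_ isT); done.
case h2: (some_zero F sg) => //.
  have [y [yE e]] := sz_true h2.
  have := sz_false h; move/(_ y); rewrite in_fsetU yE orbT => /(_ isT); done.
Qed.

Lemma In_cat (u : sublevel) a b : List.In u (a ++ b) <-> List.In u a \/ List.In u b.
Proof.
elim: a => [|x a IH] /=; first by tauto.
rewrite IH; tauto.
Qed.

Lemma In_map (f : sublevel -> sublevel) u a :
  List.In u (map f a) -> exists v, List.In v a /\ u = f v.
Proof.
elim: a => [|x a IH] //= [<-|h]; first by exists x; auto.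
have [v [h1 h2]] := IH h; exists v; auto.
Qed.

Lemma max_eval_cat a b sg : max_eval (a ++ b) sg = maxn (max_eval a sg) (max_eval b sg).
Proof. elim: a => [|x a IH] /=; rewrite ?IH; lia. Qed.

Lemma le_max u U sg : List.In u U -> sub_eval u sg <= max_eval U sg.
Proof. elim: U => [|x U IH] //= [<-|h]; first lia. have := IH h; lia. Qed.

Lemma exists_big U sg k : 0 < k -> k <= max_eval U sg ->
  exists v, List.In v U /\ k <= sub_eval v sg.
Proof.
move=> k0; elim: U => [|x U IH] /=; first lia.
rewrite leq_max => /orP [h|h]; first by exists x; auto.
have [v [h1 h2]] := IH h; exists v; auto.
Qed.

Definition shift (u : sublevel) := match u with
  | SubA E x k => SubA E x k.+1 | SubB E k => SubB E k.+1 end.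
Definition sE (u : sublevel) := match u with SubA E _ _ => E | SubB E _ => E end.
Definition addE (u : sublevel) F := match u with
  | SubA E x k => SubA (E `|` F) x k | SubB E k => SubB (E `|` F) k end.

Fixpoint prods (U V : seq sublevel) := match U with
  | [::] => [::]
  | u :: U => map (fun v => addE u (sE v)) V ++ prods U V end.

Fixpoint norm (t : level) : seq sublevel :=
 match t with
 | LVar x => [:: SubA [fset x] x 0]
 | LZero => [::]
 | LSucc t => SubB fset0 1 :: map shift (norm t)
 | LMax t1 t2 => norm t1 ++ norm t2
 | LIMax t1 t2 => prods (norm t1) (norm t2) ++ norm t2
 end.

Definition allLs U := forall u, List.In u U -> in_Ls u.

Lemma Ls_norm t : allLs (norm t).
Proof.
elim: t => [x| |t IH|t1 IH1 t2 IH2|t1 IH1 t2 IH2] u /=.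
- by move=> [<-|[]]; rewrite /= fset11.
- by [].
- move=> [<-|/In_map [v [h ->]]] //; move: (IH _ h); clear h; by case: v.
- move/In_cat => [h|h]; auto.
- move/In_cat => [h|h]; auto.
  elim: (norm t1) IH1 h => [|w U IHU] //= H /In_cat [/In_map [v [_ ->]]|h].
    move: (H w (or_introl erefl)); clear; case: w => //= E x k xE.
    by rewrite in_fsetU xE.
  apply: IHU => // z hz; apply: H; by right.
Qed.

Lemma shift_eval u sg : maxn 1 (sub_eval (shift u) sg) = (sub_eval u sg).+1.
Proof. case: u => [E x k|E k] /=; case: some_zero => //=; rewrite /maxn; case: ifP; lia. Qed.

Lemma max_shift U sg : maxn 1 (max_eval (map shift U) sg) = (max_eval U sg).+1.
Proof.
elim: U => [|u U IH] //=. have := shift_eval u sg. lia.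
Qed.

Lemma Ls_zero v sg : in_Ls v -> (sub_eval v sg == 0) = some_zero (sE v) sg.
Proof.
case: v => [E x k|E k] /= h; case hz: some_zero => //=.
have := sz_false hz h; lia. lia.
Qed.

Lemma addE_eval u F sg : sub_eval (addE u F) sg = if some_zero F sg then 0 else sub_eval u sg.
Proof. case: u => [E x k|E k] /=; rewrite sz_U; by case: some_zero; case: some_zero. Qed.

Lemma max_row u V sg : allLs V ->
  max_eval (map (fun v => addE u (sE v)) V) sg =
  if max_eval V sg == 0 then 0 else sub_eval u sg.
Proof.
elim: V => [|v V IH] //= HV.
rewrite addE_eval IH; last by move=> w hw; apply: HV; right.
rewrite -Ls_zero; last by apply: HV; left.
case: (sub_eval v sg =P 0) => [->|]; case: (max_eval V sg =P 0) => [->|] /=; rewrite ?max0n ?maxn0 /=; try lia; case: eqP; lia.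
Qed.

Lemma max_prods U V sg : allLs V ->
  max_eval (prods U V) sg = if max_eval V sg == 0 then 0 else max_eval U sg.
Proof.
move=> HV; elim: U => [|u U IH] /=; first by case: eqP.
rewrite max_eval_cat IH max_row //; case: eqP => //.
Qed.

Lemma norm_eval t sg : level_eval t sg = max_eval (norm t) sg.
Proof.
elim: t => [x| |t IH|t1 IH1 t2 IH2|t1 IH1 t2 IH2] //=.
- case hx: (sg x) => [|n] //=; first by rewrite /some_zero; case: existsP => //; lia.
  rewrite (_ : some_zero _ _ = false); first lia.
  apply/negbTE/existsP => [[[y yE] /= /eqP]]. move: yE; rewrite in_fset1 => /eqP ->.
  by rewrite hx.
- have -> : some_zero fset0 sg = false.
    by apply/negbTE/existsP => [[[y yin] _]]; move: yin; rewrite in_fset0.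
  by rewrite IH -max_shift.
- by rewrite max_eval_cat IH1 IH2.
- rewrite max_eval_cat max_prods; last exact: Ls_norm.
  rewrite -IH1 -IH2 /imax; case: (level_eval t2 sg) => //= n; lia.
Qed.

Definition pairwise (W : seq sublevel) :=
  forall u v, List.In u W -> List.In v W -> u <> v -> incomparable u v.

Lemma filter_dom u W : exists W',
  (forall w, List.In w W' -> List.In w W /\ ~ sub_le w u) /\
  (forall sg, maxn (sub_eval u sg) (max_eval W' sg) = maxn (sub_eval u sg) (max_eval W sg)).
Proof.
elim: W => [|w W [W' [H1 H2]]]; first by exists [::].
case: (classic (sub_le w u)) => hw.
- exists W'; split; first by move=> z /H1 [? ?]; split => //; right.
  move=> sg /=; have := H2 sg; have := hw sg; lia.
- exists (w :: W'); split.
  + move=> z [<-|/H1 [? ?]]; split => //; [left | right] => //.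
  + move=> sg /=; have := H2 sg; lia.
Qed.

Lemma reduce U : exists W, (forall u, List.In u W -> List.In u U) /\ pairwise W /\
  forall sg, max_eval W sg = max_eval U sg.
Proof.
elim: U => [|u U [W [H1 [H2 H3]]]].
  by exists [::]; split => //; split => // ? ? [].
case: (classic (exists w, List.In w W /\ sub_le u w)) => [[w [wW uw]]|hn].
- exists W; split; first by move=> z /H1; right.
  split => // sg /=; rewrite -H3; have := le_max sg wW; have := uw sg; lia.
- have [W' [F1 F2]] := filter_dom u W.
  exists (u :: W'); split.
    by move=> z [<-|/F1 [/H1 ? _]]; [left|right].
  split.
  + move=> a b [<-|ha] [<-|hb] ab //.
    * have [hb1 hb2] := F1 _ hb; split => // h; apply: hn; by exists b.
    * have [ha1 ha2] := F1 _ ha; split => // h; apply: hn; by exists a.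
    * apply: H2 => //; [exact: (F1 _ ha).1 | exact: (F1 _ hb).1].
  + by move=> sg /=; rewrite F2 H3.
Qed.

Definition R (u v : sublevel) : Prop := match u, v with
  | SubA E x k0, SubA E' x' S' => {subset E' <= E} /\ x = x' /\ k0 <= S'
  | SubA _ _ _, SubB _ _ => False
  | SubB E k0, SubA E' _ S' => {subset E' <= E} /\ k0 <= S'.+1
  | SubB E k0, SubB E' S' => {subset E' <= E} /\ k0 <= S'
  end.

Lemma sz_sub E E' sg : {subset E' <= E} -> some_zero E' sg -> some_zero E sg.
Proof. move=> s /sz_true [y [yE e]]; exact: (sz_intro (s _ yE) e). Qed.

Lemma R_le u v : in_Ls v -> R u v -> sub_le u v.
Proof.
move=> Lv Ruv sg.
case: u v Lv Ruv => [E x k0|E k0] [E' x' S'|E' S'] //= Lv.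
- move=> [s [<- le]]; case h: (some_zero E sg) => //.
  case h': (some_zero E' sg); first by rewrite (sz_sub s h') in h.
  lia.
- move=> [s le]; case h: (some_zero E sg) => //.
  case h': (some_zero E' sg); first by rewrite (sz_sub s h') in h.
  have := sz_false h (s _ Lv); lia.
- move=> [s le]; case h: (some_zero E sg) => //.
  case h': (some_zero E' sg); first by rewrite (sz_sub s h') in h.
  lia.
Qed.

Lemma fset_anti (E E' : {fset nat}) : {subset E' <= E} -> {subset E <= E'} -> E = E'.
Proof. move=> a b; apply/eqP; rewrite eqEfsubset; apply/andP; split; exact/fsubsetP. Qed.

Lemma R_anti u v : R u v -> R v u -> u = v.
Proof.
case: u v => [E x k0|E k0] [E' x' S'|E' S'] //=.
- move=> [a [<- c]] [d [_ f]]; rewrite (fset_anti d a); congr SubA; lia.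
- move=> [a c] [d f]; rewrite (fset_anti d a); congr SubB; lia.
Qed.

Definition sk (u : sublevel) := match u with SubA _ _ k => k | SubB _ k => k end.
Definition bnd (V : seq sublevel) := foldr (fun v m => maxn (sk v) m) 0 V.
Lemma le_bnd v V : List.In v V -> sk v <= bnd V.
Proof. elim: V => [|w V IH] //= [<-|h]; first lia. have := IH h; lia. Qed.

Lemma nz_sub v sg : 0 < sub_eval v sg -> some_zero (sE v) sg = false.
Proof. by case: v => [E x k|E k] /=; case: some_zero. Qed.

Lemma join_prime u V : in_Ls u -> (forall sg, sub_eval u sg <= max_eval V sg) ->
  exists v, List.In v V /\ R u v.
Proof.
case: u => [E x k0|E k0] /= Lu H.
- pose N := (k0 + bnd V + 2)%N.
  pose sg := fun y => if y == x then N else if y \in E then 1 else 0.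
  have hz : some_zero E sg = false.
    apply/negbTE/negP => /sz_true [y [yE]]; rewrite /sg yE.
    case: eqP => //; rewrite /N; lia.
  have := H sg; rewrite hz => Hm.
  have hpos : 0 < (sg x + k0)%N by rewrite /sg eqxx /N; lia.
  have [v [vV hv]] := exists_big hpos Hm.
  exists v; split => //.
  have hv0 : 0 < sub_eval v sg by lia.
  have hsub : {subset sE v <= E}.
    move=> y yE'; have := sz_false (nz_sub hv0) yE'.
    rewrite /sg; case: eqP => [->|_] //; by case: (y \in E).
  have hb := le_bnd vV.
  move: hv hsub hb; case: v {vV hv0} => [E' x' S'|E' S'] /=; rewrite ?(nz_sub hv0);
    move=> hv hsub hb.
  + split => //; move: hv; case: (some_zero E' sg) => [h|]; first lia.
    rewrite /sg eqxx; case: (x' =P x) => [->|_]; first (split => //; lia).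
    case: (x' \in E); rewrite /N; lia.
  + move: hv; case: some_zero; [lia | rewrite /sg eqxx /N; lia].
- pose sg := fun y => if y \in E then 1 else 0.
  have hz : some_zero E sg = false.
    by apply/negbTE/negP => /sz_true [y [yE]]; rewrite /sg yE.
  have := H sg; rewrite hz => Hm.
  have [v [vV hv]] := exists_big Lu Hm.
  exists v; split => //.
  have hv0 : 0 < sub_eval v sg by lia.
  have hsub : {subset sE v <= E}.
    move=> y yE'; have := sz_false (nz_sub hv0) yE'.
    by rewrite /sg; case: (y \in E).
  move: hv hsub; case: v {vV hv0} => [E' x' S'|E' S'] /= hv hsub; split => //;
    move: hv; case: some_zero => //; rewrite /sg; try lia.
  case: (x' \in E); lia.
Qed.

Lemma uniq_rep U V : allLs U -> allLs V -> pairwise U ->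
  (forall sg, max_eval U sg = max_eval V sg) ->
  forall u, List.In u U -> List.In u V.
Proof.
move=> LU LV PU eqm u uU.
have [v [vV Ruv]] : exists v, List.In v V /\ R u v.
  apply: join_prime; first exact: LU.
  move=> sg; rewrite -eqm; exact: le_max.
have [u' [u'U Rvu']] : exists u', List.In u' U /\ R v u'.
  apply: join_prime; first exact: LV.
  move=> sg; rewrite eqm; exact: le_max.
have le1 := R_le (LV _ vV) Ruv.
have le2 := R_le (LU _ u'U) Rvu'.
case: (classic (u = u')) => [e|ne]; last first.
  have [h _] := PU _ _ uU u'U ne; exfalso; apply: h => sg.
  exact: leq_trans (le1 sg) (le2 sg).
subst u'; by rewrite (R_anti Ruv Rvu').
Qed.

Theorem theorem35 (t : level) :
  exists us : seq sublevel,
    min_rep_of t us /\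
    (forall us' : seq sublevel, min_rep_of t us' ->
       forall u, List.In u us' <-> List.In u us).
Proof.
have [W [H1 [H2 H3]]] := reduce (norm t).
have LW : allLs W by move=> u /H1; apply: Ls_norm.
have ev : forall sg, level_eval t sg = max_eval W sg by move=> sg; rewrite H3 norm_eval.
exists W; split; first by split => //.
move=> us' [L' [P' E']] u; split.
- apply: uniq_rep => // sg; by rewrite -E' ev.
- apply: uniq_rep => // sg; by rewrite -E' ev.
Qed.
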